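(* Let $n\ge 2$, let $K\subset\mathbb{R}^n$ be a convex body of constant width $\Theta$, and let $\gamma\subset\mathbb{R}^n$ be any curve such that $K\subset\operatorname{co}(\gamma)$. Then $$ \operatorname{length}(\gamma)\ge 2(\pi-1)\sqrt{\frac{n-1}{2\pi}}\cdot\Theta . $$
   Context: $\mathbb{R}^n$ carries the standard Euclidean metric $d$. A convex body is any nonempty compact convex subset of $\mathbb{R}^n$. $\operatorname{co}(A)$ denotes the convex hull of $A$. The support function of $K$ is $h(K,u)=\sup\{(x,u):x\in K\}$ and the width function is $w(K,u)=h(K,u)+h(K,-u)$ for $u$ in the unit sphere $S^{n-1}$; $K$ has constant width $\Theta$ if $w(K,u)=\Theta$ for all $u\in S^{n-1}$. A curve is the image of a continuous map $\varphi:[a,b]\to\mathbb{R}^n$; its length is $\operatorname{length}(\gamma)=\sup\sum_{i=1}^m d(\varphi(t_{i-1}),\varphi(t_i))$ over all partitions $a=t_0<\dots<t_m=b$ (possibly $+\infty$). *)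

(* Defs.v *)
From HB Require Import structures.
From mathcomp Require Import all_boot all_order all_algebra.
From mathcomp Require Import all_classical all_reals all_analysis.
Set Implicit Arguments. Unset Strict Implicit. Unset Printing Implicit Defensive.
Import Order.TTheory GRing.Theory Num.Theory.
Import numFieldNormedType.Exports.
Local Open Scope classical_set_scope.
Local Open Scope ring_scope.

Section Defs.
Variables (R : realType) (n : nat).
Notation pt := 'rV[R]_n.

Definition dotp (x y : pt) : R := \sum_(i < n) x 0 i * y 0 i.

Definition edist (x y : pt) : R := Num.sqrt (\sum_(i < n) (x 0 i - y 0 i) ^+ 2).

Definition usphere : set pt := [set u | dotp u u = 1].

Definition convex (A : set pt) : Prop :=
  forall x y (t : R), A x -> A y -> 0 <= t -> t <= 1 ->
    A (t *: x + (1 - t) *: y).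

Definition convex_body (K : set pt) : Prop :=
  K !=set0 /\ compact K /\ convex K.

Definition co (A : set pt) : set pt :=
  [set x | forall C : set pt, convex C -> A `<=` C -> C x].

Definition support (K : set pt) (u : pt) : R := sup [set dotp x u | x in K].

Definition width (K : set pt) (u : pt) : R := support K u + support K (- u).

Definition constant_width (K : set pt) (Theta : R) : Prop :=
  forall u, usphere u -> width K u = Theta.

Definition is_curve_param (a b : R) (phi : R -> pt) : Prop :=
  a < b /\ {within `[a, b], continuous phi}.

Definition curve (a b : R) (phi : R -> pt) : set pt := phi @` `[a, b].

Definition partition (a b : R) (m : nat) (t : nat -> R) : Prop :=
  t 0%N = a /\ t m = b /\ (forall i, (i < m)%N -> t i < t i.+1).

Definition polygonal_length (phi : R -> pt) (m : nat) (t : nat -> R) : R :=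
  \sum_(i < m) edist (phi (t i)) (phi (t i.+1)).

Definition curve_length (a b : R) (phi : R -> pt) : \bar R :=
  ereal_sup [set l : \bar R | exists (m : nat) (t : nat -> R),
    partition a b m t /\ l = (polygonal_length phi m t)%:E].
End Defs.

(* Main.v *)
Require Import Defs.
From HB Require Import structures.
From mathcomp Require Import all_boot all_order all_algebra.
From mathcomp Require Import all_classical all_reals all_analysis.
From mathcomp Require Import ring lra zify.
Import Order.TTheory GRing.Theory Num.Theory.
Import numFieldNormedType.Exports.
Local Open Scope classical_set_scope.
Local Open Scope ring_scope.

Section Dot.
Variables (R : realType) (n : nat).
Notation pt := 'rV[R]_n.
Implicit Types x y z : pt.

Lemma dotpC x y : dotp x y = dotp y x.
Proof. by apply: eq_bigr => i _; rewrite mulrC. Qed.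

Lemma dotpDl x y z : dotp (x + y) z = dotp x z + dotp y z.
Proof. by rewrite /dotp -big_split; apply: eq_bigr => i _; rewrite mxE mulrDl. Qed.

Lemma dotpZl (c : R) x y : dotp (c *: x) y = c * dotp x y.
Proof. by rewrite /dotp mulr_sumr; apply: eq_bigr => i _; rewrite mxE mulrA. Qed.

Lemma dotpNl x y : dotp (- x) y = - dotp x y.
Proof. by rewrite /dotp -sumrN; apply: eq_bigr => i _; rewrite mxE mulNr. Qed.

Lemma dotpBl x y z : dotp (x - y) z = dotp x z - dotp y z.
Proof. by rewrite dotpDl dotpNl. Qed.

Lemma dotpDr x y z : dotp x (y + z) = dotp x y + dotp x z.
Proof. by rewrite dotpC dotpDl !(dotpC x). Qed.
Lemma dotpZr (c : R) x y : dotp x (c *: y) = c * dotp x y.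
Proof. by rewrite dotpC dotpZl dotpC. Qed.
Lemma dotpNr x y : dotp x (- y) = - dotp x y.
Proof. by rewrite dotpC dotpNl dotpC. Qed.
Lemma dotpBr x y z : dotp x (y - z) = dotp x y - dotp x z.
Proof. by rewrite dotpDr dotpNr. Qed.

Lemma dotp_ge0 x : 0 <= dotp x x.
Proof. by apply: sumr_ge0 => i _; rewrite -expr2 sqr_ge0. Qed.

Lemma dotp_eq0 x : dotp x x = 0 -> x = 0.
Proof.
move=> h; apply/rowP => i; rewrite mxE.
have H : forall j : 'I_n, xpredT j -> 0 <= x 0 j * x 0 j by move=> j _; rewrite -expr2 sqr_ge0.
have /eqP := @psumr_eq0P _ _ xpredT (fun i => x 0 i * x 0 i) H h i isT.
by rewrite mulf_eq0 orbb => /eqP.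
Qed.

Lemma edistE x y : Defs.edist x y = Num.sqrt (dotp (x - y) (x - y)).
Proof. by rewrite /Defs.edist /dotp; congr Num.sqrt; apply: eq_bigr => i _; rewrite !mxE expr2. Qed.

Definition ev (j : 'I_n) : pt := \row_i ((i == j)%:R).

Lemma dotp_ev x j : dotp x (ev j) = x 0 j.
Proof.
rewrite /dotp (bigD1 j) //= mxE eqxx mulr1 big1 ?addr0 // => i /negbTE ne.
by rewrite mxE ne mulr0.
Qed.

Lemma ev_ev j j' : dotp (ev j) (ev j') = (j == j')%:R.
Proof. by rewrite dotp_ev mxE eq_sym. Qed.

Definition refl (w x : pt) : pt := x - (2 * dotp x w / dotp w w) *: w.

Lemma refl_dot w x y : dotp (refl w x) (refl w y) = dotp x y.
Proof.
rewrite /refl !(dotpBl, dotpBr, dotpZl, dotpZr) (dotpC w y).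
have [->|W0] := eqVneq (dotp w w) 0.
  by rewrite invr0 !(mulr0, mul0r) !subr0.
by field.
Qed.

Lemma refl_sym w x y : dotp x (refl w y) = dotp (refl w x) y.
Proof.
rewrite /refl !(dotpBl, dotpBr, dotpZl, dotpZr) (dotpC w y) (dotpC x w).
ring.
Qed.

Variables (d : pt) (k : 'I_n).
Definition NN := Num.sqrt (dotp d d).
Definition ww : pt := NN *: ev k - d.
Definition HT x : pt := refl ww x.

Lemma HT_dot x y : dotp (HT x) (HT y) = dotp x y.
Proof. exact: refl_dot. Qed.

Lemma HT_sym x y : dotp x (HT y) = dotp (HT x) y.
Proof. exact: refl_sym. Qed.

Lemma HT_d : HT d = NN *: ev k.
Proof.
have NN2 : NN * NN = dotp d d by rewrite -expr2 sqr_sqrtr // dotp_ge0.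
have ek : dotp (ev k) (ev k) = 1 by rewrite ev_ev eqxx.
have e1 : dotp ww ww = 2 * (NN * NN) - 2 * NN * dotp d (ev k).
  rewrite /ww !(dotpBl, dotpBr, dotpZl, dotpZr) ek (dotpC (ev k) d) -NN2; ring.
have e2 : 2 * dotp d ww = - dotp ww ww.
  rewrite e1 /ww !(dotpBl, dotpBr, dotpZl, dotpZr) -NN2; ring.
have [W0|W0] := eqVneq (dotp ww ww) 0.
  have := dotp_eq0 _ W0; rewrite /HT /refl W0 invr0 mulr0 scale0r subr0.
  by move/eqP; rewrite /ww subr_eq0 => /eqP ->.
rewrite /HT /refl e2 mulNr divff // scaleN1r opprK /ww.
by rewrite addrC subrK.
Qed.

Definition uu (j : 'I_n) : pt := HT (ev j).

Lemma uu_unit j : dotp (uu j) (uu j) = 1.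
Proof. by rewrite HT_dot ev_ev eqxx. Qed.

Lemma uu_d j : j != k -> dotp d (uu j) = 0.
Proof. by move=> jk; rewrite HT_sym HT_d dotpZl ev_ev eq_sym (negbTE jk) mulr0. Qed.

Lemma uu_coord x j : dotp x (uu j) = (HT x) 0 j.
Proof. by rewrite HT_sym dotp_ev. Qed.

Lemma uu_bessel x : \sum_(j | j != k) (dotp x (uu j)) ^+ 2 <= dotp x x.
Proof.
have -> : \sum_(j | j != k) (dotp x (uu j)) ^+ 2 =
   \sum_(j | j != k) (HT x) 0 j * (HT x) 0 j.
  by apply: eq_bigr => j _; rewrite uu_coord expr2.
rewrite -(HT_dot x x) /dotp [X in _ <= X](bigD1 k) //=.
by rewrite lerDr -expr2 sqr_ge0.
Qed.

End Dot.
Lemma cs_key (R : realType) (I : finType) (P : pred I) (a : I -> R) :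
  (\sum_(i in P) `|a i|) ^+ 2 <= #|P|%:R * \sum_(i in P) a i ^+ 2.
Proof.
have -> : (\sum_(i in P) `|a i|) ^+ 2 = \sum_(i in P) \sum_(j in P) `|a i| * `|a j|.
  by rewrite expr2 mulr_suml; apply: eq_bigr => i _; rewrite mulr_sumr.
apply: le_trans (_ : _ <= \sum_(i in P) \sum_(j in P) (a i ^+ 2 + a j ^+ 2) / 2) _.
  apply: ler_sum => i _; apply: ler_sum => j _.
  have := sqr_ge0 (`|a i| - `|a j|).
  rewrite sqrrB !real_normK ?num_real // => h.
  lra.
have -> : \sum_(i in P) \sum_(j in P) (a i ^+ 2 + a j ^+ 2) / 2 =
          \sum_(i in P) (a i ^+ 2 *+ #|P| + \sum_(j in P) a j ^+ 2) / 2.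
  apply: eq_bigr => i _; rewrite -mulr_suml big_split /= sumr_const //.
rewrite -mulr_suml big_split /= sumr_const sumrMnl.
set Q := \sum_(i in P) a i ^+ 2.
rewrite -[Q *+ #|P|]mulr_natl.
set c : R := #|P|%:R.
lra.
Qed.

Lemma cs_abs (R : realType) (I : finType) (P : pred I) (a : I -> R) :
  \sum_(i in P) `|a i| <= Num.sqrt (#|P|%:R) * Num.sqrt (\sum_(i in P) a i ^+ 2).
Proof.
rewrite -sqrtrM ?ler0n //.
have hS : 0 <= \sum_(i in P) `|a i| by apply: sumr_ge0 => i _.
rewrite -(ger0_norm hS) -sqrtr_sqr.
exact/ler_wsqrtr/cs_key.
Qed.

Section Lists.
Variable R : realType.

Fixpoint psum (G : R -> R -> R) (x : R) (l : seq R) : R :=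
  if l is y :: l' then G x y + psum G y l' else 0.

Lemma psum_big G x0 x l :
  \sum_(i < size l) G (nth x0 (x :: l) i) (nth x0 (x :: l) i.+1) = psum G x l.
Proof.
elim: l x => [|y l IH] x /=; first by rewrite big_ord0.
by rewrite big_ord_recl /= -IH.
Qed.

Lemma psum_sum (I : finType) (P : pred I) (g : I -> R -> R -> R) G (c : R) x l :
  (forall p q, \sum_(j in P) g j p q <= c * G p q) ->
  \sum_(j in P) psum (g j) x l <= c * psum G x l.
Proof.
move=> H; elim: l x => [|y l IH] x /=.
  by rewrite big1 ?mulr0.
by rewrite big_split /= mulrDr lerD.
Qed.

Lemma psum_ge0 G x l : (forall p q, 0 <= G p q) -> 0 <= psum G x l.
Proof. by move=> H; elim: l x => [|y l IH] x //=; rewrite addr_ge0. Qed.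

Definition var (f : R -> R) := psum (fun p q => `|f q - f p|).

Lemma var1 f x l z : z \in x :: l ->
  `|f x - f z| + `|f z - f (last x l)| <= var f x l.
Proof.
elim: l x z => [|y l IH] x z /=.
  by rewrite inE => /eqP ->; rewrite !subrr normr0 addr0.
rewrite inE => /predU1P [->|zin].
  rewrite subrr normr0 add0r.
  have := IH y y (mem_head _ _); rewrite subrr normr0 add0r => h.
  apply: le_trans (ler_distD (f y) _ _) _.
  by rewrite distrC lerD.
have := IH y z zin => h.
apply: le_trans (_ : _ <= `|f x - f y| + (`|f y - f z| + `|f z - f (last y l)|)) _.
  by rewrite addrA lerD2r ler_distD.
by rewrite distrC lerD2l.
Qed.

Lemma var2 f x l y z : path <%R x l -> y \in x :: l -> z \in x :: l -> y <= z ->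
  `|f x - f y| + `|f y - f z| + `|f z - f (last x l)| <= var f x l.
Proof.
elim: l x => [|w l IH] x /=.
  by rewrite !inE => _ /eqP -> /eqP ->; rewrite !subrr normr0 !addr0.
move=> /andP [xw pw].
rewrite inE => /predU1P [->|yin].
  by move=> zin _; rewrite subrr normr0 add0r; exact: (var1 f x (w :: l) z zin).
have xy : x < y.
  move: yin; rewrite inE => /predU1P [->//|yin].
  have := pw; rewrite (path_sortedE lt_trans) => /andP [/allP al _].
  exact: lt_trans xw (al _ yin).
rewrite inE => /predU1P [zx|zin] yz.
  by move: (lt_le_trans xy yz); rewrite zx ltxx.
have := IH w pw yin zin yz => h.
apply: le_trans (_ : _ <= `|f x - f w| + (`|f w - f y| + `|f y - f z| + `|f z - f (last w l)|)) _.
  by rewrite !addrA !lerD2r ler_distD.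
by rewrite distrC lerD2l.
Qed.

End Lists.
Lemma cos_lt0_74 (R : realType) : cos (7/4 : R) < 0.
Proof.
set x : R := 7/4.
rewrite -(opprK (cos _)) oppr_lt0; have /cvgN h := @cvg_cos_coeff' R x.
rewrite -(cvg_lim (@Rhausdorff R) h).
apply: (@lt_trans _ _ (\sum_(0 <= i < 3) - cos_coeff' x i)).
  do 3 rewrite big_nat_recl//; rewrite big_nil addr0 /cos_coeff' /=.
  rewrite -!exprnP /x.
  rewrite !factS fact0 /=. 
  lra.
rewrite -seriesN lt_sum_lim_series //.
  by move/cvgP in h; by rewrite seriesN.
move=> d.
rewrite /cos_coeff' -!exprnP.
set k := (3 + d.*2)%N.
have -> : (3 + d.*2.+1)%N = k.+1 by rewrite /k addnS.
have ok : odd k by rewrite /k oddD odd_double.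
have hk : (3 <= k)%N by rewrite /k leq_addr.
clearbody k.
have s1 : (-1 : R) ^+ k = -1 by rewrite -signr_odd ok expr1.
have s2 : (-1 : R) ^+ k.+1 = 1 by rewrite exprS s1 mulN1r opprK.
rewrite s1 s2 mulN1r mul1r mulNr opprK.
have hfac : ((k.+1).*2)`! = ((k.*2.+2) * (k.*2.+1) * (k.*2)`!)%N.
  by rewrite doubleS factS factS mulnA.
rewrite hfac !natrM.
have hf : (0 : R) < (k.*2)`!%:R by rewrite ltr0n fact_gt0.
have hA : (7 : R) <= (k.*2.+1)%:R by rewrite (ler_nat R 7); lia.
have hB : (8 : R) <= (k.*2.+2)%:R by rewrite (ler_nat R 8); lia.
have -> : x ^+ (k.+1).*2 = x ^+ k.*2 * (x * x) by rewrite doubleS !exprS; ring.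
set y := x ^+ k.*2 / (k.*2)`!%:R.
have hy : 0 < y by rewrite /y divr_gt0 // exprn_gt0 // /x; lra.
set A := (k.*2.+1)%:R; set B := (k.*2.+2)%:R.
have -> : x ^+ k.*2 * (x * x) / (B * A * (k.*2)`!%:R) = y * ((x * x) / (B * A)).
  rewrite /y; field; rewrite /A /B; apply/and3P; split; lra.
have : (x * x) / (B * A) < 1.
  rewrite ltr_pdivrMr; last by apply: mulr_gt0; lra.
  rewrite /x; nra.
move=> h1.
by rewrite -{1}[y]mulr1 -mulrBr mulr_gt0 // subr_gt0.
Qed.
Lemma dotp_cont (R : realType) (n : nat) (u : 'rV[R]_n) :
  continuous (fun x : 'rV[R]_n => dotp x u).
Proof.
rewrite /dotp.
suff H : forall r : seq 'I_n,
    continuous (fun x : 'rV[R]_n => \sum_(i <- r) x 0 i * u 0 i) by exact: H.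
elim=> [|j r IH].
  have -> : (fun x : 'rV[R]_n => \sum_(i <- [::]) x 0 i * u 0 i) = fun _ => 0.
    by apply/funext => x; rewrite big_nil.
  by move=> x; exact: cst_continuous.
have -> : (fun x : 'rV[R]_n => \sum_(i <- j :: r) x 0 i * u 0 i) =
   ((fun x : 'rV[R]_n => x 0 j) \* (fun _ => u 0 j)) + (fun x => \sum_(i <- r) x 0 i * u 0 i).
  by apply/funext => x; rewrite big_cons.
move=> x; apply: continuousD; last exact: IH.
apply: continuousM; last exact: cst_continuous.
exact: coord_continuous.
Qed.

Lemma comp_within (R : realType) (n : nat) (a b : R) (phi : R -> 'rV[R]_n) (u : 'rV[R]_n) :
  {within `[a, b], continuous phi} ->
  {within `[a, b], continuous (fun t => dotp (phi t) u)}.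
Proof.
move=> h x.
exact: (@continuous_comp (subspace `[a, b]) _ _ (from_subspace `[a, b] phi) (fun y => dotp y u) x (h x) (@dotp_cont R n u _)).
Qed.
Lemma pi_lt72 (R : realType) : pi < 7 / 2 :> R.
Proof.
rewrite ltNge; apply/negP => h.
have : 0 <= cos (7 / 4 : R).
  apply: cos_ge0_pihalf; apply/andP; split.
    have := pi_ge0 R; lra.
  lra.
have := cos_lt0_74 R; lra.
Qed.

Lemma const_le (R : realType) (m : R) : 0 <= m ->
  2 * (pi - 1) * Num.sqrt (m / (2 * pi)) <= 2 * Num.sqrt m.
Proof.
move=> m0.
have p2 := pi_ge2 R; have p7 := pi_lt72 R.
set r := Num.sqrt (2 * pi : R).
have r0 : 0 < r by rewrite sqrtr_gt0; lra.
have r2 : r ^+ 2 = 2 * pi by rewrite sqr_sqrtr //; lra.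
have qr : Num.sqrt (m / (2 * pi)) * r = Num.sqrt m.
  rewrite -sqrtrM ?divr_ge0 //; last lra.
  by rewrite mulfVK //; lra.
have pr : pi - 1 <= r by nra.
rewrite -(ler_pM2r r0).
have -> : 2 * (pi - 1) * Num.sqrt (m / (2 * pi)) * r = 2 * (pi - 1) * Num.sqrt m.
  by rewrite -qr; ring.
have := sqrtr_ge0 m; nra.
Qed.

Theorem corollary1 (R : realType) (n : nat) (K : set 'rV[R]_n) (Theta : R)
    (a b : R) (phi : R -> 'rV[R]_n) :
  (2 <= n)%N ->
  convex_body K ->
  constant_width K Theta ->
  is_curve_param a b phi ->
  K `<=` co (curve a b phi) ->
  ((2 * (pi - 1) * Num.sqrt ((n - 1)%:R / (2 * pi)) * Theta)%:E
     <= curve_length a b phi)%E.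
Proof.
move=> n2 [K0 [Kc Kconv]] cw [ab phic] Kco.
pose k : 'I_n := Ordinal (ltnW n2).
pose d := phi a - phi b.
pose u := uu _ _ d k.
pose f j t := dotp (phi t) (u j).
have fcont j : {within `[a, b], continuous (f j)} := comp_within _ _ _ _ phi (u j) phic.
have exmax : forall j, exists s, s \in `[a, b] /\ forall t, t \in `[a, b] -> f j t <= f j s.
  by move=> j; have [s ? ?] := EVT_max (ltW ab) (fcont j); exists s.
have exmin : forall j, exists s, s \in `[a, b] /\ forall t, t \in `[a, b] -> f j s <= f j t.
  by move=> j; have [s ? ?] := EVT_min (ltW ab) (fcont j); exists s.
have [smax hsmax] := choice exmax.
have [smin hsmin] := choice exmin.
have hco : forall (C : set 'rV[R]_n), Defs.convex C -> (forall t, t \in `[a, b] -> C (phi t)) ->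
    forall x, K x -> C x.
  move=> C cC hC x Kx; apply: (Kco x Kx) => // _ [t tab <-]; apply: hC.
  by rewrite inE.
have wid : forall j, Theta <= f j (smax j) - f j (smin j).
  move=> j.
  have [x0 Kx0] := K0.
  rewrite -(cw (u j) (uu_unit _ _ _ _ _)) /Defs.width /Defs.support.
  have h1 : sup [set dotp x (u j) | x in K] <= f j (smax j).
    apply: ge_sup; first by exists (dotp x0 (u j)), x0.
    move=> _ [x Kx <-].
    apply: (hco [set y | dotp y (u j) <= f j (smax j)]) => //.
      move=> y z t /= hy hz t0 t1; rewrite dotpDl !dotpZl; nra.
    by move=> t tab /=; apply: (hsmax j).2.
  have h2 : sup [set dotp x (- u j) | x in K] <= - f j (smin j).
    apply: ge_sup; first by exists (dotp x0 (- u j)), x0.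
    move=> _ [x Kx <-]; rewrite dotpNr lerN2.
    apply: (hco [set y | f j (smin j) <= dotp y (u j)]) => //.
      move=> y z t /= hy hz t0 t1; rewrite dotpDl !dotpZl; nra.
    by move=> t tab /=; apply: (hsmin j).2.
  lra.
pose pts := [seq smax j | j <- enum 'I_n] ++ [seq smin j | j <- enum 'I_n].
pose mid := sort <=%R (undup [seq x <- pts | (a < x) && (x < b)]).
have midP x : x \in mid -> (a < x) && (x < b).
  by rewrite mem_sort mem_undup mem_filter => /andP [].
have inL : forall s, s \in `[a, b] -> s \in pts -> s \in a :: rcons mid b.
  move=> s; rewrite in_itv /= => /andP [as_ sb] sp.
  rewrite inE mem_rcons inE.
  have [->|sa] := eqVneq s a; first by [].
  have [->|sb'] := eqVneq s b; first by rewrite ?eqxx ?orbT.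
  rewrite mem_sort mem_undup mem_filter sp andbT.
  by rewrite !lt_neqAle as_ sb sb' eq_sym sa !orbT.
have pL : path <%R a (rcons mid b).
  rewrite rcons_path; apply/andP; split.
    rewrite (path_sortedE lt_trans); apply/andP; split.
      by apply/allP => x /midP /andP [].
    rewrite lt_sorted_uniq_le sort_uniq undup_uniq /=.
    exact: (sort_sorted le_total).
  have := mem_last a mid; rewrite inE => /predU1P [->//|/midP /andP [_ ->]//].
pose P := psum R (fun p q => Defs.edist (phi p) (phi q)) a (rcons mid b).
have hP : (P%:E <= curve_length a b phi)%E.
  apply: ereal_sup_ubound; exists (size (rcons mid b)), (fun i => nth a (a :: rcons mid b) i).
  split; last by rewrite /P -(psum_big _ _ a).
  rewrite /Defs.partition; split; first by [].
  split; first by rewrite size_rcons /= nth_rcons ltnn eqxx.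
  by move=> i hi; have /pathP := pL; move=> /(_ a i hi).
have P0 : 0 <= P by apply: psum_ge0 => p q; exact: sqrtr_ge0.
have memmax j : smax j \in a :: rcons mid b.
  apply: inL; first exact: (hsmax j).1.
  by rewrite mem_cat map_f ?mem_enum.
have memmin j : smin j \in a :: rcons mid b.
  apply: inL; first exact: (hsmin j).1.
  by rewrite mem_cat map_f ?mem_enum ?orbT.
have varj : forall j, j != k -> 2 * Theta <= var R (f j) a (rcons mid b).
  move=> j jk.
  have fab : f j a = f j b.
    apply/eqP; rewrite -subr_eq0; apply/eqP.
    by rewrite /f -dotpBl uu_d.
  have := wid j.
  have nrm (v : R) : v <= `|v| /\ - v <= `|v|.
    by split; [exact: ler_norm | rewrite -normrN; exact: ler_norm].
  have [le|le] := lerP (smax j) (smin j).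
    have := var2 R (f j) a (rcons mid b) _ _ pL (memmax j) (memmin j) le.
    rewrite last_rcons.
    have := nrm (f j a - f j (smax j)); have := nrm (f j (smax j) - f j (smin j)).
    have := nrm (f j (smin j) - f j b).
    lra.
  have := var2 R (f j) a (rcons mid b) _ _ pL (memmin j) (memmax j) (ltW le).
  rewrite last_rcons.
  have := nrm (f j a - f j (smin j)); have := nrm (f j (smin j) - f j (smax j)).
  have := nrm (f j (smax j) - f j b).
  lra.
pose Pk := predC1 k.
have hsum : \sum_(j in Pk) var R (f j) a (rcons mid b) <= Num.sqrt (#|Pk|%:R) * P.
  apply: psum_sum => p q.
  apply: le_trans (cs_abs _ _ Pk (fun j => f j q - f j p)) _.
  rewrite ler_wpM2l ?sqrtr_ge0 // edistE; apply: ler_wsqrtr.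
  have := uu_bessel R n d k (phi q - phi p).
  have -> : dotp (phi p - phi q) (phi p - phi q) = dotp (phi q - phi p) (phi q - phi p).
    by rewrite -opprB dotpNl dotpNr opprK.
  apply: le_trans; rewrite le_eqVlt; apply/orP; left; apply/eqP.
  by apply: eq_bigr => j _; rewrite /f dotpBl.
have hlow : (2 * Theta) *+ #|Pk| <= \sum_(j in Pk) var R (f j) a (rcons mid b).
  rewrite -sumr_const; apply: ler_sum => j jk; apply: varj.
  by move: jk; rewrite inE.
have cP : #|Pk| = (n - 1)%N by rewrite cardC1 card_ord subn1.
rewrite cP in hsum hlow.
have := le_trans hlow hsum.
rewrite -mulr_natr => H.
apply: le_trans hP; rewrite lee_fin.
have m1 : (1 : R) <= (n - 1)%:R by rewrite (ler_nat R 1); lia.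
move: H; set m : R := (n - 1)%:R => H.
have hC := const_le R m (le_trans ler01 m1).
have C0 : 0 <= 2 * (pi - 1) * Num.sqrt (m / (2 * pi)).
  by rewrite mulr_ge0 ?sqrtr_ge0 // mulr_ge0 // subr_ge0 (le_trans _ (pi_ge2 R)) // ler1n.
move: hC C0; set C := 2 * (pi - 1) * Num.sqrt (m / (2 * pi)) => hC C0.
have s0 : 0 < Num.sqrt m by rewrite sqrtr_gt0; lra.
have s2 : Num.sqrt m ^+ 2 = m by rewrite sqr_sqrtr //; lra.
move: hC s0 s2 H; set s := Num.sqrt m => hC s0 s2 H.
have [T0|T0] := lerP Theta 0.
  have : C * Theta <= 0 by rewrite mulr_ge0_le0.
  lra.
have : 2 * Theta * s <= P.
  rewrite -(ler_pM2l s0); nra.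
nra.
Qed.
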